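(* Let $u,u_h^{(2)},\tilde u,\tilde u_1,\tilde u_2$ be elements of $\bigcap_{i=1}^N\mathcal{D}(J_i)$. Suppose that, for each $i\in\{1,\dots,N\}$ and each $k\in\{1,2\}$, one has $|J_i(u)-J_i(u_h^{(2)})|<b_h|J_i(u)-J_i(\tilde u_k)|$, for some $b_h<b_0$ with a fixed $b_0\in(0,1)$. Suppose also that for all $i=1,\dots,N$, $$J_i(u_h^{(2)})\notin[\min\{J_i(\tilde u_1),J_i(\tilde u_2)\},\ \max\{J_i(\tilde u_1),J_i(\tilde u_2)\}].$$ Then: if $|J_i(u)-J_i(\tilde u_1)|\le|J_i(u)-J_i(\tilde u_2)|$ for all $i\in\{1,\dots,N\}$, it follows that $J_{\mathfrak{E}}(\tilde u_1)\le J_{\mathfrak{E}}(\tilde u_2)$.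
   Context: Let $U$ be a real Banach space. Let $J_1,\dots,J_N$ be real-valued functionals with domains $\mathcal{D}(J_i)\subseteq U$. In the application, $u$ is the exact solution of a nonlinear problem, $u_h^{(2)}$ is a discrete solution on an enriched finite element space, and $\tilde u$ is a fixed approximation. Write $\vec J(v):=(J_1(v),\dots,J_N(v))$, and for $x\in\mathbb{R}^N$ write $|x|_N:=(|x_1|,\dots,|x_N|)$. For $M\subseteq\mathbb{R}^N$, an error-weighting function is a map $\mathfrak{E}:(\mathbb{R}^+_0)^N\times M\to\mathbb{R}^+_0$ such that for every $m\in M$: - $\mathfrak{E}(\cdot,m)\in\mathcal{C}^1((\mathbb{R}^+_0)^N,\mathbb{R}^+_0)$; - $\mathfrak{E}(\cdot,m)$ is strictly monotonically increasing in each component; - $\mathfrak{E}(0,m)=0$. Fix such an $\mathfrak{E}$ with $\vec J(\tilde u)\in M$, and define $J_{\mathfrak{E}}(v):=\mathfrak{E}(|\vec J(u_h^{(2)})-\vec J(v)|_N,\vec J(\tilde u))$ for $v\in\bigcap_{i=1}^N\mathcal{D}(J_i)$. *)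

(* Defs.v *)
From HB Require Import structures.
From mathcomp Require Import all_boot all_order all_algebra.
From mathcomp Require Import all_classical all_reals all_analysis.
Set Implicit Arguments. Unset Strict Implicit. Unset Printing Implicit Defensive.
Import Order.TTheory GRing.Theory Num.Theory.
Import numFieldNormedType.Exports.
Local Open Scope classical_set_scope.
Local Open Scope ring_scope.

Section Defs.
Variables (R : realType) (N : nat).

Definition orthant : set 'rV[R]_N := [set x | forall i : 'I_N, 0 <= x ord0 i].

Definition absN (x : 'rV[R]_N) : 'rV[R]_N := \row_i `|x ord0 i|.

Definition evec (i : 'I_N) : 'rV[R]_N := \row_j (if j == i then 1 else 0).

Definition C1_orthant (f : 'rV[R]_N -> R) : Prop :=
  exists (g : 'rV[R]_N -> R) (O : set 'rV[R]_N),
    [/\ open O, orthant `<=` O,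
        (forall x, orthant x -> g x = f x) &
        (forall x, O x -> differentiable g x /\
           forall i : 'I_N, {for x, continuous ('D_(evec i) g)})].

Definition strict_incr_each (f : 'rV[R]_N -> R) : Prop :=
  forall (i : 'I_N) (x y : 'rV[R]_N), orthant x -> orthant y ->
    (forall j, j != i -> x ord0 j = y ord0 j) -> x ord0 i < y ord0 i ->
    f x < f y.

Definition error_weighting (M : set 'rV[R]_N)
    (E : 'rV[R]_N -> 'rV[R]_N -> R) : Prop :=
  forall m, M m ->
    [/\ (forall x, orthant x -> 0 <= E x m),
        C1_orthant (E ^~ m),
        strict_incr_each (E ^~ m) &
        E 0 m = 0].

Definition vecJ (U : Type) (J : 'I_N -> U -> R) (v : U) : 'rV[R]_N :=
  \row_i J i v.

Definition JE (U : Type) (J : 'I_N -> U -> R) (E : 'rV[R]_N -> 'rV[R]_N -> R)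
    (uh2 ut v : U) : R :=
  E (absN (vecJ J uh2 - vecJ J v)) (vecJ J ut).

End Defs.

(* Main.v *)
Require Import Defs.
From HB Require Import structures.
From mathcomp Require Import all_boot all_order all_algebra.
From mathcomp Require Import all_classical all_reals all_analysis.
From mathcomp Require Import lra.
Import Order.TTheory GRing.Theory Num.Theory.
Import numFieldNormedType.Exports.
Local Open Scope classical_set_scope.
Local Open Scope ring_scope.

Lemma absE (R : realType) (t : R) : (0 <= t /\ `|t| = t) \/ (t < 0 /\ `|t| = - t).
Proof.
case: (lerP 0 t) => h; [left; split=> //; exact: ger0_norm|right; split=> //; exact: ltr0_norm].
Qed.
Arguments absE {R}.

Lemma scalar_step (R : realType) (x h a1 a2 b : R) :
  b < 1 -> `|x - h| < b * `|x - a1| -> `|x - h| < b * `|x - a2| ->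
  ~ (Num.min a1 a2 <= h <= Num.max a1 a2) ->
  `|x - a1| <= `|x - a2| -> `|h - a1| <= `|h - a2|.
Proof.
move=> b1 H1 H2 Hn H3.
have n1 := normr_ge0 (x - a1). have n2 := normr_ge0 (x - a2).
have n0 := normr_ge0 (x - h).
have hb : 0 < b.
  rewrite ltNge; apply/negP => hb.
  have : b * `|x - a1| <= 0 by rewrite mulr_le0_ge0.
  lra.
have K1 : `|x - h| < `|x - a1|.
  apply: (lt_le_trans H1); rewrite -[X in _ <= X]mul1r ler_wpM2r //; lra.
have K2 : `|x - h| < `|x - a2|.
  apply: (lt_le_trans H2); rewrite -[X in _ <= X]mul1r ler_wpM2r //; lra.
have Hn' : h < Num.min a1 a2 \/ Num.max a1 a2 < h.
  case: (ltP h (Num.min a1 a2)) => ?; first by left.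
  case: (ltP (Num.max a1 a2) h) => ?; first by right.
  by exfalso; apply: Hn; apply/andP.
move: Hn'; rewrite lt_min gt_max.
clear H1 H2 Hn.
case: (absE (x-h)) => [[? ?]|[? ?]];
case: (absE (x-a1)) => [[? ?]|[? ?]];
case: (absE (x-a2)) => [[? ?]|[? ?]];
case: (absE (h-a1)) => [[? ?]|[? ?]];
case: (absE (h-a2)) => [[? ?]|[? ?]];
move=> [/andP[? ?]| /andP[? ?]]; lra.
Qed.

Lemma mono (R : realType) (N : nat) (f : 'rV[R]_N -> R) (x y : 'rV[R]_N) :
  strict_incr_each f -> orthant x -> orthant y ->
  (forall i, x ord0 i <= y ord0 i) -> f x <= f y.
Proof.
move=> Hf Ox Oy Hxy.
pose z (k : nat) : 'rV[R]_N := \row_j (if (j < k)%N then y ord0 j else x ord0 j).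
have Oz : forall k, orthant (z k).
  by move=> k j; rewrite /z mxE; case: ifP => _; [apply: Oy| apply: Ox].
have step : forall k, (k <= N)%N -> f x <= f (z k).
  elim=> [|k IH] hk.
    suff -> : z 0%N = x by [].
    by apply/rowP => j; rewrite /z mxE.
  have hkN : (k < N)%N by [].
  apply: (le_trans (IH (ltnW hk))).
  pose i := Ordinal hkN.
  have Heq : forall j, j != i -> (z k) ord0 j = (z k.+1) ord0 j.
    move=> j hj; rewrite /z !mxE (ltnS j k) [(j <= k)%N]leq_eqVlt.
    have -> : (nat_of_ord j == k) = false.
      by apply/negbTE; apply: contra hj => /eqP hj'; apply/eqP/val_inj.
    by [].
  have Hi1 : (z k) ord0 i = x ord0 i by rewrite /z mxE ltnn.
  have Hi2 : (z k.+1) ord0 i = y ord0 i by rewrite /z mxE ltnSn.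
  have := Hxy i; rewrite le_eqVlt => /orP[/eqP he|hl].
    suff -> : z k = z k.+1 by [].
    apply/rowP => j; have [->|hj] := eqVneq j i; first by rewrite Hi1 Hi2.
    by rewrite Heq.
  apply/ltW/(Hf i) => //; by rewrite Hi1 Hi2.
have := step N (leqnn N).
suff -> : z N = y by [].
by apply/rowP => j; rewrite /z mxE ltn_ord.
Qed.

Theorem mainTheorem4 (R : realType) (U : completeNormedModType R) (N : nat)
    (D : 'I_N -> set U) (J : 'I_N -> U -> R)
    (M : set 'rV[R]_N) (E : 'rV[R]_N -> 'rV[R]_N -> R)
    (u uh2 ut ut1 ut2 : U) (bh b0 : R) :
  error_weighting M E ->
  M (vecJ J ut) ->
  (forall i, D i u /\ D i uh2 /\ D i ut /\ D i ut1 /\ D i ut2) ->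
  0 < b0 -> b0 < 1 -> bh < b0 ->
  (forall i, `|J i u - J i uh2| < bh * `|J i u - J i ut1|) ->
  (forall i, `|J i u - J i uh2| < bh * `|J i u - J i ut2|) ->
  (forall i, ~ (Num.min (J i ut1) (J i ut2) <= J i uh2
                <= Num.max (J i ut1) (J i ut2))) ->
  (forall i, `|J i u - J i ut1| <= `|J i u - J i ut2|) ->
  JE J E uh2 ut ut1 <= JE J E uh2 ut ut2.
Proof.
move=> HE HM _ hb0 hb01 hbb H1 H2 Hn H3.
have [_ _ Hinc _] := HE _ HM.
rewrite /JE; apply: (@mono _ _ _ _ _ Hinc) => //.
- by move=> i; rewrite /absN mxE.
- by move=> i; rewrite /absN mxE.
move=> i; rewrite /absN /vecJ !mxE.
apply: (@scalar_step _ (J i u) _ _ _ bh) => //.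
lra.
Qed.
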